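(* Let $\mathcal O$ be the ring of integers of a finite extension of $\mathbb{Q}_p$ whose maximal ideal $\mathfrak m$ is a divided-power ideal, with residue field $\mathbb F$. Let $P,Q\in\mathcal O[X]$ be monic polynomials with $\bar P=\bar Q$ in $\mathbb F[X]$. Then for every $n\ge1$ and every symmetric function $f\in\Lambda$, $f(P_n)\equiv f(Q_n)\pmod{n\mathfrak m}$. In particular $p_n(P)\equiv p_n(Q)\pmod{n\mathfrak m}$ for all $n\ge1$.
   Context: $\bar P$ denotes reduction modulo $\mathfrak m$. An ideal $\mathfrak a$ of a torsion-free $\mathbb{Z}_{(p)}$-algebra $A$ is a divided-power ideal if $a^p\in p\,\mathfrak a$ for all $a\in\mathfrak a$. If $P$ has roots $\alpha_1,\dots,\alpha_d$ (with multiplicity) in an extension of $\mathcal O$, then $P_n:=\prod_{i=1}^d(X-\alpha_i^n)\in\mathcal O[X]$, and similarly $Q_n$. $\Lambda=\mathbb{Z}[e_1,e_2,\dots]$ is the ring of integral symmetric functions; for monic $R=X^d+a_1X^{d-1}+\dots+a_d$, $e_n(R)=(-1)^na_n$ for $1\le n\le d$, $e_n(R)=0$ for $n>d$, and $f(R)$ is obtained by writing $f$ as an integer polynomial in the $e_n$ and substituting $e_n(R)$ (equivalently, evaluating $f$ at the roots of $R$, padded by zeros). $p_n(P)=\sum_i\alpha_i^n$. *)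

(* Defs.v *)
From HB Require Import structures.
From mathcomp Require Import all_boot all_order all_algebra.
From mathcomp Require Import mpoly.
Set Implicit Arguments. Unset Strict Implicit. Unset Printing Implicit Defensive.
Import Order.TTheory GRing.Theory Num.Theory.
Local Open Scope ring_scope.

Definition dvdO {O : comNzRingType} (a b : O) : Prop := exists c : O, b = a * c.

(* [is_padic_int_ring p O pi]: O is a complete discrete valuation ring of
   characteristic 0 with uniformizer pi, whose residue field O/(pi) is finite
   of characteristic p.  These are exactly the rings of integers of finite
   extensions of Q_p. *)
Definition is_padic_int_ring (p : nat) (O : idomainType) (pi : O) : Prop :=
  [/\
      (forall k : nat, k%:R = 0 :> O -> k = 0%N),
      (* DVR with uniformizer pi *)
      pi != 0 /\ pi \notin GRing.unit,
      (forall x : O, x != 0 ->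
         exists (u : O) (k : nat), u \in GRing.unit /\ x = u * pi ^+ k),
      (* residue field is finite and of characteristic p *)
      dvdO pi (p%:R) /\
        (exists s : seq O, forall x : O, exists2 y, y \in s & dvdO pi (x - y))
    & (* complete for the pi-adic topology *)
      (forall x : nat -> O, (forall k, dvdO (pi ^+ k) (x k.+1 - x k)) ->
         exists l : O, forall k, dvdO (pi ^+ k) (l - x k))].

Definition in_m {O : idomainType} (pi : O) (x : O) : Prop := dvdO pi x.

Definition in_nm {O : idomainType} (pi : O) (n : nat) (x : O) : Prop :=
  exists2 c : O, in_m pi c & x = n%:R * c.

(* m is a divided-power ideal: a^p \in p m for all a \in m *)
Definition dp_ideal {O : idomainType} (p : nat) (pi : O) : Prop :=
  forall a : O, in_m pi a -> in_nm pi p (a ^+ p).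

(* e_k(R) for R = X^d + a_1 X^(d-1) + ... + a_d monic:
   (-1)^k a_k for 1 <= k <= d, and 0 for k > d. *)
Definition esym_poly {O : comNzRingType} (R : {poly O}) (k : nat) : O :=
  if (k <= (size R).-1)%N then (-1) ^+ k * R`_((size R).-1 - k) else 0.

(* A symmetric function f in Lambda = Z[e_1, e_2, ...] is written as an
   integer polynomial g in finitely many variables, variable i standing for
   e_(i+1).  f(R) := g(e_1(R), ..., e_m(R)). *)
Definition symf_eval {O : comNzRingType} (m : nat) (g : {mpoly int[m]})
  (R : {poly O}) : O :=
  mmap (fun z : int => z%:~R) (fun i : 'I_m => esym_poly R i.+1) g.

(* Main.v *)
Require Import Defs.
From HB Require Import structures.
From mathcomp Require Import all_boot all_order all_algebra.
From mathcomp Require Import mpoly.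
From mathcomp Require Import ring.
From mathcomp Require Import fingroup perm.
Set Implicit Arguments. Unset Strict Implicit. Unset Printing Implicit Defensive.
Import Order.TTheory GRing.Theory Num.Theory.
Local Open Scope ring_scope.
Lemma binom_l (R : comNzRingType) (l : nat) (x y : R) : prime l ->
  exists w : R, (x + y) ^+ l = x ^+ l + y ^+ l + l%:R * (y * w).
Proof.
move=> pl; have l_gt1 := prime_gt1 pl.
case: l l_gt1 pl => [|[|l']] // _ pl.
exists (\sum_(i < l'.+1) (x ^+ (l'.+2 - i.+1) * y ^+ i *+ ('C(l'.+2, i.+1) %/ l'.+2))).
rewrite exprDn big_ord_recl big_ord_recr /= subn0 expr0 mulr1 bin0 mulr1n.
rewrite subnn expr0 mul1r binn mulr1n.
rewrite -[RHS]addrA; congr (_ + _); rewrite addrC; congr (_ + _).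
rewrite mulr_sumr mulr_sumr; apply: eq_bigr => i _ /=.
have hd : (l'.+2 %| 'C(l'.+2, (bump 0 i)))%N.
  apply: prime_dvd_bin => //; rewrite /bump /= add1n ltnS /=.
  by have := ltn_ord i; rewrite !ltnS.
have eb : bump 0 i = i.+1 by rewrite /bump leq0n.
rewrite -{1}(divnK hd) eb mulrnA -[_ *+ l'.+2]mulr_natl; congr (_ * _).
by rewrite exprS mulrCA mulrnAr.
Qed.

Lemma sum_pow (R : comNzRingType) (l : nat) (I : Type) (r : seq I) (P : pred I)
  (F : I -> R) : prime l ->
  exists w : R, (\sum_(i <- r | P i) F i) ^+ l
                = \sum_(i <- r | P i) F i ^+ l + l%:R * w.
Proof.
move=> pl; elim: r => [|i r [w IH]].
  by exists 0; rewrite !big_nil expr0n mulr0 addr0; case: l pl.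
rewrite !big_cons; case: (P i) => //; last by exists w.
have [w1 ->] := binom_l (F i) (\sum_(j <- r | P j) F j) pl.
exists (w + (\sum_(j <- r | P j) F j) * w1).
by rewrite IH mulrDr; ring.
Qed.

Lemma msymXU (n : nat) (R : comNzRingType) (s : 'S_n) (i : 'I_n) :
  msym s ('X_i : {mpoly R[n]}) = 'X_(s i).
Proof. by rewrite /msym mmapX mmap1U. Qed.

Section Frob.
Variables (R : idomainType) (d l k : nat).
Hypothesis pl : prime l.
Hypothesis lnz : (l%:R : R) != 0.

Definition Xl : d.-tuple {mpoly R[d]} := [tuple 'X_i ^+ l | i < d].
Definition Sd : d.-tuple {mpoly R[d]} := [tuple mesym d R i.+1 | i < d].

Lemma frob_exists : exists K : {mpoly R[d]},
  mesym d R k \mPo Xl = (mesym d R k) ^+ l + l%:R * (K \mPo Sd).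
Proof.
have E : mesym d R k \mPo Xl
   = \sum_(h : {set 'I_d} | #|h| == k) (\prod_(i in h) 'X_i) ^+ l.
  rewrite /mesym rmorph_sum; apply: eq_bigr => h _.
  rewrite rmorph_prod -prodrXl; apply: eq_bigr => i _.
  by have := comp_mpolyXU i Xl; rewrite -tnth_nth tnth_mktuple.
have [w Hw] := @sum_pow _ l _ (index_enum _) (fun h : {set 'I_d} => #|h| == k)
   (fun h => \prod_(i in h) ('X_i : {mpoly R[d]})) pl.
have Esym : mesym d R k \mPo Xl \is symmetric.
  apply/issymP => s; rewrite E rmorph_sum /=.
  rewrite (reindex_inj (imset_inj (@perm_inj _ (s^-1)%g))) /=.
  apply: eq_big => h; first by rewrite card_imset //; apply: perm_inj.
  move=> _; rewrite rmorphXn rmorph_prod /=; congr (_ ^+ _).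
  rewrite big_imset /=; last by move=> x y _ _; apply: perm_inj.
  by apply: eq_bigr => i _; rewrite msymXU permKV.
have lnzp : (l%:R : {mpoly R[d]}) != 0.
  by rewrite -(rmorph_nat (@mpolyC d R)) mpolyC_eq0.
have Hsym : - w \is symmetric.
  apply/issymP => s; apply: (mulfI lnzp).
  have eq1 : l%:R * - w = mesym d R k \mPo Xl - (mesym d R k) ^+ l.
    by rewrite E /mesym Hw; ring.
  rewrite -[X in X * msym s _](rmorph_nat (msym s)) -rmorphM eq1 rmorphB rmorphXn /=.
  by rewrite (issymP _ Esym) (issymP _ (mesym_sym _ _ _)).
have [K [HK _]] := sym_fundamental Hsym.
exists K; rewrite /Sd HK E Hw /mesym; ring.
Qed.

End Frob.

Section Ideal.
Variables (OK : idomainType) (pi : OK).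

Definition inI (c x : OK) : Prop := exists2 y, in_m pi y & x = c * y.

Lemma in_m0 : in_m pi 0. Proof. by exists 0; rewrite mulr0. Qed.
Lemma in_mD x y : in_m pi x -> in_m pi y -> in_m pi (x + y).
Proof. by move=> [a ->] [b ->]; exists (a + b); rewrite mulrDr. Qed.
Lemma in_mN x : in_m pi x -> in_m pi (- x).
Proof. by move=> [a ->]; exists (- a); rewrite mulrN. Qed.
Lemma in_mMr x r : in_m pi x -> in_m pi (x * r).
Proof. by move=> [a ->]; exists (a * r); rewrite mulrA. Qed.
Lemma in_mMl x r : in_m pi x -> in_m pi (r * x).
Proof. by move=> h; rewrite mulrC; apply: in_mMr. Qed.

Lemma inI0 c : inI c 0. Proof. by exists 0; [apply: in_m0 | rewrite mulr0]. Qed.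
Lemma inID c x y : inI c x -> inI c y -> inI c (x + y).
Proof. by move=> [a ha ->] [b hb ->]; exists (a + b); [apply: in_mD | rewrite mulrDr]. Qed.
Lemma inIN c x : inI c x -> inI c (- x).
Proof. by move=> [a ha ->]; exists (- a); [apply: in_mN | rewrite mulrN]. Qed.
Lemma inIB c x y : inI c x -> inI c y -> inI c (x - y).
Proof. by move=> hx hy; apply: inID => //; apply: inIN. Qed.
Lemma inIMl c x r : inI c x -> inI c (r * x).
Proof. by move=> [a ha ->]; exists (r * a); [apply: in_mMl | rewrite mulrCA]. Qed.
Lemma inIMr c x r : inI c x -> inI c (x * r).
Proof. by move=> h; rewrite mulrC; apply: inIMl. Qed.
Lemma inIsc c x r : inI c x -> inI (r * c) (r * x).
Proof. by move=> [a ha ->]; exists a => //; rewrite mulrA. Qed.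

Lemma inI_mulB c x y x' y' : inI c (x - y) -> inI c (x' - y') ->
  inI c (x * x' - y * y').
Proof.
move=> h1 h2; have -> : x * x' - y * y' = (x - y) * x' + y * (x' - y') by ring.
by apply: inID; [apply: inIMr | apply: inIMl].
Qed.

Lemma inI_expB c x y n : inI c (x - y) -> inI c (x ^+ n - y ^+ n).
Proof.
move=> h; elim: n => [|n IH]; first by rewrite !expr0 subrr; apply: inI0.
by rewrite !exprS; apply: inI_mulB.
Qed.

Lemma inI_mmapB c (n : nat) (T : nzRingType) (f : T -> OK)
  (u w : 'I_n -> OK) (q : {mpoly T[n]}) :
  (forall i, inI c (u i - w i)) -> inI c (mmap f u q - mmap f w q).
Proof.
move=> h; rewrite /mmap.
apply: (big_ind2 (fun x y => inI c (x - y))).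
- by rewrite subrr; apply: inI0.
- move=> x1 x2 y1 y2 h1 h2.
  have -> : x1 + y1 - (x2 + y2) = (x1 - x2) + (y1 - y2) by ring.
  by apply: inID.
move=> m _; apply: inI_mulB; first by rewrite subrr; apply: inI0.
rewrite /mmap1; apply: (big_ind2 (fun x y => inI c (x - y))).
- by rewrite subrr; apply: inI0.
- by move=> x1 x2 y1 y2 h1 h2; apply: inI_mulB.
by move=> i _; apply: inI_expB.
Qed.

End Ideal.

Section Padic.
Variables (p : nat) (OK : idomainType) (pi : OK).
Hypothesis pp : prime p.
Hypothesis hO : is_padic_int_ring p pi.
Hypothesis hdp : dp_ideal p pi.

Lemma char0 (k : nat) : (0 < k)%N -> (k%:R : OK) != 0.
Proof.
case: hO => h1 _ _ _ _ kgt0; apply/eqP => /h1 k0; by rewrite k0 in kgt0.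
Qed.

Lemma pi_nunit c : pi * c <> 1.
Proof.
case: hO => _ [_ hu] _ _ _ hc; move/negP: hu; apply; apply/unitrP.
by exists c; split => //; rewrite mulrC.
Qed.

Lemma in_m_1 : ~ in_m pi 1.
Proof. by case=> c /esym; apply: pi_nunit. Qed.

Lemma unit_l (l : nat) : prime l -> l != p -> exists u : OK, l%:R * u = 1.
Proof.
move=> pl lp; have l0 : (0 < l)%N by apply: prime_gt0.
case: hO => _ _ h3 [[cp hcp] _] _.
have [u [k [uu hk]]] := h3 _ (char0 l0).
case: k hk => [|k] hk.
  by exists u^-1; rewrite hk expr0 mulr1 mulrV.
have cop : coprime l p by rewrite prime_coprime // dvdn_prime2.
have [a _ ha] := Bezoutl p l0.
rewrite (eqP cop) in ha.
have hq := divnK ha.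
have : (((1 + a * p) %/ l * l)%N%:R : OK) = (1 + a * p)%N%:R by rewrite hq.
rewrite !natrD !natrM hk hcp exprS => e.
exfalso; apply: (@pi_nunit ((((1 + a * p) %/ l)%N%:R) * (u * pi ^+ k) - a%:R * cp)).
have -> : pi * (((1 + a * p) %/ l)%N%:R * (u * pi ^+ k) - a%:R * cp)
   = ((1 + a * p) %/ l)%N%:R * (u * (pi * pi ^+ k)) - a%:R * (pi * cp) by ring.
by rewrite e addrK.
Qed.

Lemma powl (l : nat) (c x y : OK) : prime l ->
  inI pi c (x - y) -> inI pi (l%:R * c) (x ^+ l - y ^+ l).
Proof.
move=> pl [z hz hxy].
have -> : x = y + c * z by rewrite -hxy; ring.
have [w ->] := binom_l y (c * z) pl.
have -> : y ^+ l + (c * z) ^+ l + l%:R * (c * z * w) - y ^+ l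
        = (c * z) ^+ l + l%:R * c * (z * w) by ring.
apply: inID; last by exists (z * w) => //; apply: in_mMr.
have l0 : (0 < l)%N by apply: prime_gt0.
case: l l0 pl => // l' _ pl.
case: (eqVneq l'.+1 p) => [lp | lnp].
  have [t ht hzt] := hdp hz.
  exists (c ^+ l' * t); first by apply: in_mMl.
  by rewrite exprMn lp hzt -lp exprS; ring.
have [u hu] := unit_l pl lnp.
exists (z * (u * c ^+ l' * z ^+ l')); first by apply: in_mMr.
have -> : (c * z) ^+ l'.+1 = (l'.+1%:R * u) * (c * z) ^+ l'.+1 by rewrite hu mul1r.
by rewrite exprMn !exprS; ring.
Qed.


Variables (L : fieldType) (iota : {rmorphism OK -> L}).
Hypothesis iota_inj : injective iota.

Lemma mmap_ext n (R S : nzRingType) (f : R -> S) (h1 h2 : 'I_n -> S)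
  (q : {mpoly R[n]}) : h1 =1 h2 -> mmap f h1 q = mmap f h2 q.
Proof. by move=> e; rewrite /mmap; apply: eq_bigr => m _; rewrite (mmap1_eq m e). Qed.

Lemma ev_comp d k (v : 'I_d -> L) (q : {mpoly OK[k]}) (lq : k.-tuple {mpoly OK[d]}) :
  mmap iota v (q \mPo lq) = mmap iota (fun i => mmap iota v (tnth lq i)) q.
Proof.
rewrite comp_mpolyE raddf_sum /= [RHS]/mmap; apply: eq_bigr => m _.
rewrite mmapZ rmorph_prod /=; congr (_ * _).
by rewrite /mmap1; apply: eq_bigr => i _; rewrite rmorphXn.
Qed.

Lemma ev_iota d (u : 'I_d -> OK) (q : {mpoly OK[d]}) :
  mmap iota (fun i => iota (u i)) q = iota (q.@[u]).
Proof.
rewrite /meval /mmap rmorph_sum; apply: eq_bigr => m _.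
rewrite rmorphM /= rmorph_prod /mmap1; congr (_ * _).
by apply: eq_bigr => i _; rewrite rmorphXn.
Qed.

Lemma ev_X d (v : 'I_d -> L) (i : 'I_d) : mmap iota v ('X_i : {mpoly OK[d]}) = v i.
Proof. by rewrite mmapX mmap1U. Qed.

Lemma ev_mesym d k (v : 'I_d -> L) : mmap iota v (mesym d OK k)
  = \sum_(h : {set 'I_d} | #|h| == k) \prod_(i in h) v i.
Proof.
rewrite /mesym rmorph_sum; apply: eq_bigr => h _.
rewrite rmorph_prod; apply: eq_bigr => i _; exact: ev_X.
Qed.

Lemma coef_roots (ps : seq L) d (v : 'I_d -> L) k : size ps = d ->
  (forall i : 'I_d, ps`_i = v i) -> (k <= d)%N ->
  (\prod_(a <- ps) ('X - a%:P))`_(d - k) = (-1) ^+ k * mmap iota v (mesym d OK k).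
Proof.
move=> hs; subst d => hv hk.
rewrite coef_prod_XsubC ?leq_subr // subKn // ev_mesym; congr (_ * _).
by apply: eq_bigr => h _; apply: eq_bigr => i _; rewrite hv.
Qed.

Lemma ev_frob d (v : 'I_d -> L) (a b : {mpoly OK[d]}) (l : nat) :
  mmap iota v (a ^+ l + l%:R * b) = (mmap iota v a) ^+ l + l%:R * mmap iota v b.
Proof. by rewrite rmorphD rmorphXn rmorphM rmorph_nat. Qed.

Section Step.
Variables (l : nat) (pl : prime l).

Let lnz : (l%:R : OK) != 0 := char0 (prime_gt0 pl).

Lemma frob_ex' d k : exists K : {mpoly OK[d]},
  (mesym d OK k \mPo @Xl OK d l == mesym d OK k ^+ l + l%:R * (K \mPo @Sd OK d)).
Proof. by have [K HK] := @frob_exists OK d l k pl lnz; exists K; apply/eqP. Qed.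

Definition Kf d k := xchoose (frob_ex' d k).
Lemma HK d k : mesym d OK k \mPo @Xl OK d l
   = mesym d OK k ^+ l + l%:R * (Kf d k \mPo @Sd OK d).
Proof. exact: eqP (xchooseP (frob_ex' d k)). Qed.

Definition ePk (P : {poly OK}) d k := (-1) ^+ k * P`_(d - k).
Definition eP (P : {poly OK}) d : 'I_d -> OK := fun i : 'I_d => ePk P d i.+1.
Definition e' (P : {poly OK}) d k := ePk P d k ^+ l + l%:R * meval (@eP P d) (Kf d k).
Definition Pl (P : {poly OK}) d := \poly_(j < d.+1) ((-1) ^+ (d - j) * e' P d (d - j)).

Lemma Pl_roots P alpha : map_poly iota P = \prod_(a <- alpha) ('X - a%:P) ->
  map_poly iota (Pl P (size alpha)) = \prod_(a <- alpha) ('X - (a ^+ l)%:P).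
Proof.
move=> hP; set d := size alpha; pose v := fun i : 'I_d => alpha`_i.
have ePv k : (k <= d)%N -> iota (ePk P d k) = mmap iota v (mesym d OK k).
  move=> hk; rewrite /ePk rmorphM rmorph_sign /= -coef_map hP.
  by rewrite (coef_roots (v := v)) // signrMK.
have frobL k : (k <= d)%N ->
    mmap iota (fun i => v i ^+ l) (mesym d OK k) = iota (e' P d k).
  move=> hk.
  have e1 : mmap iota (fun i => v i ^+ l) (mesym d OK k)
          = mmap iota v (mesym d OK k \mPo @Xl OK d l).
    rewrite ev_comp; apply: mmap_ext => i.
    by rewrite tnth_mktuple rmorphXn /= ev_X.
  rewrite e1 HK ev_frob ev_comp /e'.
  rewrite rmorphD rmorphXn (rmorphM iota (l%:R)) rmorph_nat ePv // -ev_iota; congr (_ + _ * _).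
  apply: mmap_ext => i /=; rewrite tnth_mktuple /eP ePv //.
have -> : \prod_(a <- alpha) ('X - (a ^+ l)%:P)
        = \prod_(a <- map (fun a => a ^+ l) alpha) ('X - a%:P) by rewrite big_map.
apply/polyP => j; rewrite coef_map coef_poly /=.
case: ltnP => hj.
  set k := (d - j)%N.
  have ej : j = (d - k)%N by rewrite /k subKn.
  rewrite rmorphM rmorph_sign -frobL ?leq_subr // [in RHS]ej.
  rewrite (coef_roots (v := fun i => v i ^+ l)) ?size_map ?leq_subr //.
  by move=> i; rewrite (nth_map 0).
rewrite rmorph0 nth_default // size_prod_XsubC size_map //.
Qed.

Lemma Pl_cong (P Q : {poly OK}) (d : nat) (c : OK) : (forall i, inI pi c (P`_i - Q`_i)) ->
  forall j, inI pi (l%:R * c) ((Pl P d)`_j - (Pl Q d)`_j).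
Proof.
move=> h j; rewrite !coef_poly; case: ifP => _; last by rewrite subrr; apply: inI0.
rewrite -mulrBr; apply: inIMl; rewrite /e'.
have hk k : inI pi c (ePk P d k - ePk Q d k).
  by rewrite /ePk -mulrBr; apply: inIMl.
rewrite opprD addrACA -mulrBr; apply: inID; first exact: powl.
apply: inIsc; apply: inI_mmapB => i; exact: hk.
Qed.

End Step.

Lemma chain (P Q : {poly OK}) (alpha beta : seq L) :
  size alpha = size beta ->
  map_poly iota P = \prod_(a <- alpha) ('X - a%:P) ->
  map_poly iota Q = \prod_(b <- beta) ('X - b%:P) ->
  (forall i, inI pi 1 (P`_i - Q`_i)) ->
  forall n, (0 < n)%N -> exists Pn Qn : {poly OK},
   [/\ map_poly iota Pn = \prod_(a <- alpha) ('X - (a ^+ n)%:P),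
       map_poly iota Qn = \prod_(b <- beta) ('X - (b ^+ n)%:P)
     & forall i, inI pi n%:R (Pn`_i - Qn`_i)].
Proof.
move=> hs hP hQ h1 n; elim: n {-2}n (leqnn n) => [|N IH] n hn n0.
  by rewrite leqn0 in hn; rewrite (eqP hn) in n0.
case: (ltngtP n 1) => [n1|n1|->].
- by rewrite ltnS leqn0 in n1; rewrite (eqP n1) in n0.
- pose l := pdiv n; have pl : prime l := pdiv_prime n1.
  pose n' := (n %/ l)%N.
  have hn' : n = (n' * l)%N by rewrite divnK // pdiv_dvd.
  have n'0 : (0 < n')%N by rewrite divn_gt0 ?prime_gt0 // dvdn_leq // pdiv_dvd.
  have n'n : (n' < n)%N by rewrite ltn_Pdiv // prime_gt1.
  have [Pn' [Qn' [hPn' hQn' hc]]] := IH n' (leq_trans (n'n) hn) n'0.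
  have hPa : map_poly iota Pn'
     = \prod_(a <- map (fun a => a ^+ n') alpha) ('X - a%:P) by rewrite big_map.
  have hQb : map_poly iota Qn'
     = \prod_(a <- map (fun a => a ^+ n') beta) ('X - a%:P) by rewrite big_map.
  exists (@Pl l pl Pn' (size alpha)), (@Pl l pl Qn' (size alpha)); split.
  + rewrite -(size_map (fun a => a ^+ n')) (@Pl_roots l pl _ _ hPa) big_map.
    by apply: eq_bigr => a _; rewrite -exprM -hn'.
  + rewrite hs -(size_map (fun a => a ^+ n')) (@Pl_roots l pl _ _ hQb) big_map.
    by apply: eq_bigr => a _; rewrite -exprM -hn'.
  + by move=> i; rewrite hn' natrM mulrC; apply: Pl_cong.
- exists P, Q; split.
  + by rewrite hP; apply: eq_bigr => a _; rewrite expr1.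
  + by rewrite hQ; apply: eq_bigr => a _; rewrite expr1.
  + by [].
Qed.

End Padic.

Unset Implicit Arguments.
Set Strict Implicit.

Theorem proposition6p5 (p : nat) (OK : idomainType) (pi : OK) :
  prime p -> is_padic_int_ring p pi -> dp_ideal p pi ->
  forall P Q : {poly OK}, P \is monic -> Q \is monic ->
  (* reductions mod m agree: \bar P = \bar Q in F[X] *)
  (forall i : nat, in_m pi (P`_i - Q`_i)) ->
  (* roots of P and Q in an extension field L of O *)
  forall (L : fieldType) (iota : {rmorphism OK -> L}), injective iota ->
  forall alpha beta : seq L,
  map_poly iota P = \prod_(a <- alpha) ('X - a%:P) ->
  map_poly iota Q = \prod_(b <- beta) ('X - b%:P) ->
  forall n : nat, (0 < n)%N ->
  (forall Pn Qn : {poly OK},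
     map_poly iota Pn = \prod_(a <- alpha) ('X - (a ^+ n)%:P) ->
     map_poly iota Qn = \prod_(b <- beta) ('X - (b ^+ n)%:P) ->
     forall (k : nat) (f : {mpoly int[k]}),
       in_nm pi n (symf_eval f Pn - symf_eval f Qn))
  /\
  (forall pnP pnQ : OK,
     iota pnP = \sum_(a <- alpha) a ^+ n ->
     iota pnQ = \sum_(b <- beta) b ^+ n ->
     in_nm pi n (pnP - pnQ)).
Proof.
move=> pp hO hdp P Q mP mQ hPQ L iota inj alpha beta hP hQ n n0.
have i0 : iota 0 = 0 := rmorph0 iota.
have sP : size P = (size alpha).+1.
  by rewrite -(size_map_inj_poly inj i0) hP size_prod_XsubC.
have sQ : size Q = (size beta).+1.
  by rewrite -(size_map_inj_poly inj i0) hQ size_prod_XsubC.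
have key (R S : {poly OK}) : R \is monic -> (forall i, in_m pi (S`_i - R`_i)) ->
    (size S < size R)%N -> False.
  move=> mR hSR hlt; apply: (in_m_1 hO).
  have := hSR (size R).-1; rewrite nth_default; last by rewrite -ltnS prednK // (leq_ltn_trans _ hlt).
  have -> : R`_(size R).-1 = 1 by move/monicP: mR.
  by rewrite sub0r => /in_mN; rewrite opprK.
have hs : size alpha = size beta.
  apply/eqP; rewrite -eqSS -sP -sQ; case: (ltngtP (size P) (size Q)) => // h.
  - exfalso; apply: (key Q P mQ) => // i; exact: hPQ.
  - exfalso; apply: (key P Q mP) => // i.
    by have := in_mN (hPQ i); rewrite opprB.
have h1 : forall i, inI pi 1 (P`_i - Q`_i).
  by move=> i; exists (P`_i - Q`_i); [exact: hPQ | rewrite mul1r].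
have [Pn0 [Qn0 [hP0 hQ0 hc]]] := chain pp hO hdp hs hP hQ h1 n0.
have sP0 : size Pn0 = (size alpha).+1.
  by rewrite -(size_map_inj_poly inj i0) hP0 size_prod_XsubC.
have sQ0 : size Qn0 = (size alpha).+1.
  by rewrite -(size_map_inj_poly inj i0) hQ0 size_prod_XsubC hs.
split.
  move=> Pn Qn hPn hQn k f.
  have -> : Pn = Pn0 by apply: (map_inj_poly inj i0); rewrite hPn hP0.
  have -> : Qn = Qn0 by apply: (map_inj_poly inj i0); rewrite hQn hQ0.
  suff : inI pi n%:R (symf_eval f Pn0 - symf_eval f Qn0) by [].
  rewrite /symf_eval; apply: inI_mmapB => i.
  rewrite /esym_poly sP0 sQ0; case: ifP => _.
    by rewrite -mulrBr; apply: inIMl.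
  by rewrite subrr; apply: inI0.
move=> pnP pnQ hpP hpQ.
suff : inI pi n%:R (pnP - pnQ) by [].
case E: (size alpha) => [|d'].
  have a0 : alpha = [::] by apply: size0nil.
  have b0 : beta = [::] by apply: size0nil; rewrite -hs.
  rewrite a0 big_nil -i0 in hpP; rewrite b0 big_nil -i0 in hpQ.
  by rewrite (inj _ _ hpP) (inj _ _ hpQ) subrr; apply: inI0.
have coefE (s : seq L) : size s = d'.+1 -> \sum_(a <- s) a ^+ n
    = - (\prod_(a <- map (fun a => a ^+ n) s) ('X - a%:P))`_d'.
  move=> hs'; rewrite (_ : d' = (size (map (fun a => a ^+ n) s)).-1); last by rewrite size_map hs'.
  by rewrite coefPn_prod_XsubC ?size_map ?hs' // opprK big_map.
rewrite coefE // big_map -hP0 coef_map -rmorphN in hpP.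
rewrite coefE -?hs // big_map -hQ0 coef_map -rmorphN in hpQ.
rewrite (inj _ _ hpP) (inj _ _ hpQ) -opprD; apply: inIN; exact: hc.
Qed.
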